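(* Let $n,k\ge 1$ be integers and let $M=V^{\otimes k}\otimes (V^* )^{\otimes k}$, where $V=\mathbb{C}^n$. For $1\le i\le k$ let $p_i=\frac1n c_{i,i}$. Then $$\ker p_1\cap \ker p_2\cap\cdots\cap \ker p_k=(\mathrm{id}-p_1)(\mathrm{id}-p_2)\cdots(\mathrm{id}-p_k)M .$$
   Context: $V=\mathbb{C}^n$ is the space of $n\times 1$ column vectors with standard basis $v_1,\dots,v_n$; $V^*$ is the space of $1\times n$ row vectors with dual basis $v_1^*,\dots,v_n^*$ ($v_i^*$ has a $1$ in column $i$ and $0$ elsewhere). For $1\le i,j\le k$ the contraction map $c_{i,j}:M\to M$ is the linear map $$c_{i,j}(u_1\otimes\cdots\otimes u_k\otimes w_1^*\otimes\cdots\otimes w_k^* )=(w_j^*u_i)\sum_{\ell=1}^n u_1\otimes\cdots\otimes v_\ell\otimes\cdots\otimes u_k\otimes w_1^*\otimes\cdots\otimes v_\ell^*\otimes\cdots\otimes w_k^*,$$ where $v_\ell$ replaces $u_i$ in the $i$th slot of $V^{\otimes k}$, $v_\ell^*$ replaces $w_j^*$ in the $j$th slot of $(V^* )^{\otimes k}$, and $w_j^*u_i\in\mathbb{C}$ is the matrix product (equal to $\mathrm{tr}(u_iw_j^* )$). One has $c_{i,i}^2=nc_{i,i}$, so $p_i$ is an idempotent; $\mathrm{id}$ is the identity map of $M$. *)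

(* Defs.v *)
From HB Require Import structures.
From mathcomp Require Import all_boot all_order all_algebra.
Set Implicit Arguments. Unset Strict Implicit. Unset Printing Implicit Defensive.
Import Order.TTheory GRing.Theory Num.Theory.
Local Open Scope ring_scope.

(* Multi-indices: a pair (a, b) with a, b : 'I_k -> 'I_n indexes the standard
   basis vector  v_{a 1} (x) ... (x) v_{a k} (x) v*_{b 1} (x) ... (x) v*_{b k}
   of M = V^{(x)k} (x) (V^* )^{(x)k}, V = C^n.  Slots 1..k are 'I_k = 0..k-1. *)
Definition Idx (n k : nat) : finType :=
  ({ffun 'I_k -> 'I_n} * {ffun 'I_k -> 'I_n})%type.

Notation Mten C n k := {ffun Idx n k -> C%type}.

Definition ebasis (C : numClosedFieldType) (n k : nat)
  (a b : {ffun 'I_k -> 'I_n}) : Mten C n k :=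
  [ffun x => ((x == (a, b)) : nat)%:R].

Definition upd (n k : nat) (a : {ffun 'I_k -> 'I_n}) (i : 'I_k) (l : 'I_n)
  : {ffun 'I_k -> 'I_n} := [ffun t => if t == i then l else a t].

(* contraction c_{i,j}, defined on basis vectors by
   c_{i,j}(e_{a,b}) = (v*_{b j} v_{a i}) * sum_l e_{a[i:=l], b[j:=l]}
   and extended linearly; note v*_{b j} v_{a i} = [a i == b j]. *)
Definition contr (C : numClosedFieldType) (n k : nat) (i j : 'I_k)
  (f : Mten C n k) : Mten C n k :=
  [ffun y => \sum_(x : Idx n k) f x *
     (((x.1 i == x.2 j) : nat)%:R *
        \sum_(l < n) ebasis C (upd x.1 i l) (upd x.2 j l) y)].

Definition pproj (C : numClosedFieldType) (n k : nat) (i : 'I_k)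
  (f : Mten C n k) : Mten C n k := [ffun y => (n%:R)^-1 * contr i i f y].

Definition Qmap (C : numClosedFieldType) (n k : nat) (f : Mten C n k)
  : Mten C n k :=
  foldr (fun i g => g - pproj i g) f (enum 'I_k).

(* Main.v *)
Require Import Defs.
From HB Require Import structures.
From mathcomp Require Import all_boot all_order all_algebra ring.
Import GRing.Theory Num.Theory.
Local Open Scope ring_scope.

Section S.
Variables (C : numClosedFieldType) (n k : nat).
Implicit Types (a b c d : {ffun 'I_k -> 'I_n}) (i j : 'I_k).

Lemma eq_upd a c i l :
  (c == upd a i l) = (c i == l) && [forall t, (t != i) ==> (c t == a t)].
Proof.
apply/eqP/andP.
- move=> ->; rewrite /upd ffunE eqxx; split=> //.
  by apply/forallP=> t; apply/implyP => /negbTE ti; rewrite ffunE ti.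
- case=> /eqP ci /forallP H; apply/ffunP=> t; rewrite ffunE.
  case: eqP => [->|/eqP ti] //; exact/eqP/(implyP (H t) ti).
Qed.

Lemma sum1 (y : Idx n k) a b i :
  \sum_(l < n) (((y == (upd a i l, upd b i l)) : nat)%:R : C) =
  ((y == (upd a i (y.1 i), upd b i (y.1 i))) : nat)%:R.
Proof.
case: y => c d /=.
rewrite (bigD1 (c i)) //= big1 ?addr0 // => l /negbTE hl.
by rewrite xpair_eqE eq_upd eq_sym hl.
Qed.

Lemma natb_mul (p q : bool) : ((p : nat)%:R * (q : nat)%:R : C) = ((p && q) : nat)%:R.
Proof. by case: p; case: q; rewrite /= ?mul1r ?mul0r. Qed.

Lemma forall_sym a a' i :
  [forall t, (t != i) ==> (a t == a' t)] = [forall t, (t != i) ==> (a' t == a t)].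
Proof. by apply: eq_forallb => t; rewrite (eq_sym (a t)). Qed.

Lemma sym_ind (x y : Idx n k) i :
  (((x.1 i == x.2 i) : nat)%:R * ((y == (upd x.1 i (y.1 i), upd x.2 i (y.1 i))) : nat)%:R : C)
  = ((y.1 i == y.2 i) : nat)%:R * ((x == (upd y.1 i (x.1 i), upd y.2 i (x.1 i))) : nat)%:R.
Proof.
case: x y => [a' b'] [a b] /=; rewrite !natb_mul !xpair_eqE !eq_upd !eqxx /=.
rewrite (forall_sym a) (forall_sym b).
rewrite [b i == a i]eq_sym [b' i == a' i]eq_sym.
by case: (a' i == b' i); case: (a i == b i); rewrite /= ?andbF.
Qed.

Lemma sum_pick (f : Mten C n k) z : \sum_(x : Idx n k) f x * ((x == z) : nat)%:R = f z.
Proof.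
rewrite (bigD1 z) //= eqxx mulr1 big1 ?addr0 // => x /negbTE ->; by rewrite mulr0.
Qed.

Lemma pprojE i (f : Mten C n k) (y : Idx n k) :
  pproj i f y = n%:R^-1 * (((y.1 i == y.2 i) : nat)%:R *
      \sum_(m < n) f (upd y.1 i m, upd y.2 i m)).
Proof.
rewrite /pproj ffunE; congr (_ * _); rewrite /contr ffunE.
transitivity (\sum_(x : Idx n k) f x * (((y.1 i == y.2 i) : nat)%:R *
      \sum_(m < n) ((x == (upd y.1 i m, upd y.2 i m)) : nat)%:R)).
  apply: eq_bigr => x _; congr (_ * _).
  have -> : \sum_(l < n) ebasis C (upd x.1 i l) (upd x.2 i l) y =
            \sum_(l < n) ((y == (upd x.1 i l, upd x.2 i l)) : nat)%:R.
    by apply: eq_bigr => l _; rewrite /ebasis ffunE.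
  by rewrite sum1 sym_ind sum1.
under eq_bigr => x _ do rewrite mulrCA mulr_sumr.
rewrite -mulr_sumr exchange_big /=; congr (_ * _).
by apply: eq_bigr => m _; rewrite sum_pick.
Qed.

Lemma ffunBE (T : finType) (R : zmodType) (f g : {ffun T -> R}) x : (f - g) x = f x - g x.
Proof. by rewrite !ffunE. Qed.

Lemma upd_at a i m : upd a i m i = m.
Proof. by rewrite ffunE eqxx. Qed.
Lemma upd_neq a i j m : j != i -> upd a i m j = a j.
Proof. by move/negbTE => h; rewrite ffunE h. Qed.
Lemma upd_upd a i m m' : upd (upd a i m) i m' = upd a i m'.
Proof. by apply/ffunP => t; rewrite !ffunE; case: eqP. Qed.
Lemma upd_updC a i j m m' : i != j ->
  upd (upd a i m) j m' = upd (upd a j m') i m.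
Proof.
move=> hij; apply/ffunP => t; rewrite !ffunE.
case: (t =P j) => [tj|]; case: (t =P i) => [ti|] //.
by move: hij; rewrite -ti -tj eqxx.
Qed.

Lemma pprojB i (f g : Mten C n k) : pproj i (f - g) = pproj i f - pproj i g.
Proof.
apply/ffunP => y; rewrite ffunBE !pprojE.
rewrite -!mulrBr -sumrB; do 2 congr (_ * _).
by apply: eq_bigr => m _; rewrite ffunBE.
Qed.

Lemma pproj0 i : pproj i (0 : Mten C n k) = 0.
Proof. by have := pprojB i 0 0; rewrite !subrr. Qed.

Hypothesis hn : (0 < n)%N.

Lemma pprojK i (f : Mten C n k) : pproj i (pproj i f) = pproj i f.
Proof.
apply/ffunP => y; rewrite !pprojE.
under eq_bigr => m _ do rewrite pprojE /= !upd_at eqxx mul1r.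
under eq_bigr => m _ do under eq_bigr => m' _ do rewrite !upd_upd.
have hn0 : (n%:R : C) != 0 by rewrite pnatr_eq0 -lt0n.
rewrite sumr_const card_ord -mulrnAl; congr (_ * (_ * _)).
by rewrite -[X in X * _ = _]mulr_natr mulVf // mul1r.
Qed.

Lemma pprojC i j (f : Mten C n k) : i != j ->
  pproj i (pproj j f) = pproj j (pproj i f).
Proof.
move=> hij; apply/ffunP => y; rewrite !pprojE.
have hji : j != i by rewrite eq_sym.
under eq_bigr => m _ do rewrite pprojE /= !(upd_neq _ _ _ _ hji).
under [in RHS]eq_bigr => m _ do rewrite pprojE /= !(upd_neq _ _ _ _ hij).
rewrite -!mulr_sumr [in RHS]exchange_big /=.
under [in RHS]eq_bigr => m _ do under eq_bigr => m' _ do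
  rewrite !(upd_updC _ _ _ _ _ hji).
set S := \sum_(_ < n) _.
ring.
Qed.

Lemma Q_fix (s : seq 'I_k) (g : Mten C n k) : (forall i, pproj i g = 0) ->
  foldr (fun i h => h - pproj i h) g s = g.
Proof. by move=> H; elim: s => //= i s ->; rewrite H subr0. Qed.

Lemma Q_ker (s : seq 'I_k) (f : Mten C n k) j : j \in s ->
  pproj j (foldr (fun i h => h - pproj i h) f s) = 0.
Proof.
elim: s => //= i s IH; rewrite inE; case: (j =P i) => [-> _|/eqP hji /= hj].
  by rewrite pprojB pprojK subrr.
by rewrite pprojB (pprojC _ _ _ hji) IH // pproj0 subrr.
Qed.

End S.

Theorem proposition1p5 (C : numClosedFieldType) (n k : nat)
  (hn : (0 < n)%N) (hk : (0 < k)%N) (g : Mten C n k) :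
  (forall i : 'I_k, pproj i g = 0) <-> (exists f : Mten C n k, g = Qmap f).
Proof.
split.
  by move=> H; exists g; rewrite /Qmap Q_fix.
by case=> f -> i; rewrite /Qmap Q_ker // mem_enum.
Qed.
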